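(* Let $\mathbb{R}^n_s$ be $\mathbb{R}^n$ with a non-degenerate symmetric bilinear form of signature $(n-s,s)$, let $G\subset\mathrm{Iso}(\mathbb{R}^n_s)$ be a real Zariski-closed subgroup whose centralizer $L=\mathrm{Z}_{\mathrm{Iso}(\mathbb{R}^n_s)}(G)$ acts transitively on $\mathbb{R}^n$, and let $U$ be the unipotent radical of $L$; assume $U$ acts transitively on $\mathbb{R}^n$. For $p\in\mathbb{R}^n$ let $F_p=G.p$, let $U_p$ be the stabilizer of $p$ in $U$, and let $U_{F_p}=\{u\in U\mid u.F_p\subseteq F_p\}$. Then $U_{F_p}$ is an algebraic subgroup of $U$ acting transitively on $F_p$, and $U_p$ is a normal subgroup of $U_{F_p}$. *)

(* Defs.v *)
From HB Require Import structures.
From mathcomp Require Import all_boot all_order all_algebra.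
From mathcomp Require Import reals.
Set Implicit Arguments. Unset Strict Implicit. Unset Printing Implicit Defensive.
Import Order.TTheory GRing.Theory Num.Theory.
Local Open Scope ring_scope.

(* An affine map x |-> A x + b of R^n, represented by the pair (A, b).
   (Equivalently the (n+1)x(n+1) matrix [[A, b], [0, 1]].) *)
Definition aff (R : realType) (n : nat) := ('M[R]_n * 'cV[R]_n)%type.

Section Aff.
Variables (R : realType) (n : nat).

Definition amul (g h : aff R n) : aff R n := (g.1 *m h.1, g.1 *m h.2 + g.2).
Definition aone : aff R n := (1%:M, 0).
Definition ainv (g : aff R n) : aff R n := (invmx g.1, - (invmx g.1 *m g.2)).
Definition act (g : aff R n) (p : 'cV[R]_n) : 'cV[R]_n := g.1 *m p + g.2.

Definition gramJ (s : nat) : 'M[R]_n :=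
  diag_mx (\row_(i < n) (if (i < n - s)%N then 1 else -1)).

Definition Iso (s : nat) (g : aff R n) : Prop :=
  g.1^T *m gramJ s *m g.1 = gramJ s.

Inductive polyfun : (aff R n -> R) -> Prop :=
| pf_const (c : R) : polyfun (fun _ => c)
| pf_lin (i j : 'I_n) : polyfun (fun g => g.1 i j)
| pf_tr (i : 'I_n) : polyfun (fun g => g.2 i 0)
| pf_add f h : polyfun f -> polyfun h -> polyfun (fun g => f g + h g)
| pf_mul f h : polyfun f -> polyfun h -> polyfun (fun g => f g * h g).

Definition zariski_closed (S : aff R n -> Prop) : Prop :=
  exists P : (aff R n -> R) -> Prop,
    (forall f, P f -> polyfun f) /\
    (forall g, S g <-> (forall f, P f -> f g = 0)).

Definition subgroup_of (K H : aff R n -> Prop) : Prop :=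
  (forall g, H g -> K g) /\ H aone /\
  (forall g h, H g -> H h -> H (amul g h)) /\
  (forall g, H g -> H (ainv g)).

Definition algebraic_subgroup_of (K H : aff R n -> Prop) : Prop :=
  subgroup_of K H /\ zariski_closed H.

Definition normal_subgroup_of (K N : aff R n -> Prop) : Prop :=
  subgroup_of K N /\
  (forall k x, K k -> N x -> N (amul (amul k x) (ainv k))).

Definition centralizer (s : nat) (G : aff R n -> Prop) (g : aff R n) : Prop :=
  Iso s g /\ (forall h, G h -> amul g h = amul h g).

Definition unipotent (g : aff R n) : Prop := (g.1 - 1%:M) ^+ n = 0.

(* U is the unipotent radical of the algebraic group L: the largest
   Zariski-closed normal subgroup of L consisting of unipotent elements
   (in characteristic 0 unipotent algebraic groups are connected). *)
Definition unipotent_radical (L U : aff R n -> Prop) : Prop :=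
  normal_subgroup_of L U /\ zariski_closed U /\
  (forall u, U u -> unipotent u) /\
  (forall N, normal_subgroup_of L N -> zariski_closed N ->
     (forall x, N x -> unipotent x) -> forall x, N x -> U x).

Definition transitive_on (H : aff R n -> Prop) (F : 'cV[R]_n -> Prop) : Prop :=
  forall x y, F x -> F y -> exists h, H h /\ act h x = y.

Definition aorbit (H : aff R n -> Prop) (p : 'cV[R]_n) (x : 'cV[R]_n) : Prop :=
  exists h, H h /\ act h p = x.

End Aff.

(* Main.v *)
Require Import Defs.
From HB Require Import structures.
From mathcomp Require Import all_boot all_order all_algebra.
From mathcomp Require Import reals.
From Stdlib Require Import FunctionalExtensionality IndefiniteDescription.
Set Implicit Arguments. Unset Strict Implicit. Unset Printing Implicit Defensive.
Import Order.TTheory GRing.Theory Num.Theory.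
Local Open Scope ring_scope.

Section H.
Variables (R : realType) (n : nat).
Local Notation A := (aff R n).

Lemma pf_ext (f h : A -> R) : polyfun f -> (forall g, f g = h g) -> polyfun h.
Proof. by move=> pf e; have <- : f = h by apply: functional_extensionality. Qed.

Lemma pf_sum (I : Type) (r : seq I) (F : I -> A -> R) :
  (forall i, polyfun (F i)) -> polyfun (fun g => \sum_(i <- r) F i g).
Proof.
move=> hF; elim: r => [|x r IH].
  by apply: (pf_ext (pf_const _ 0)) => g; rewrite big_nil.
by apply: (pf_ext (pf_add (hF x) IH)) => g; rewrite big_cons.
Qed.

Lemma pf_sub (f h : A -> R) : polyfun f -> polyfun h -> polyfun (fun g => f g - h g).
Proof.
move=> pf ph; apply: (pf_ext (pf_add pf (pf_mul (pf_const _ (-1)) ph))) => g.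
by rewrite mulN1r.
Qed.

Definition pmap (P : A -> A) :=
  (forall i j, polyfun (fun g => (P g).1 i j)) /\ (forall i, polyfun (fun g => (P g).2 i 0)).
Definition pvec (y : A -> 'cV[R]_n) := forall i, polyfun (fun g => y g i 0).

Lemma pmap_id : pmap id.
Proof. by split=> *; [apply: pf_lin | apply: pf_tr]. Qed.

Lemma pmap_const a : pmap (fun _ => a).
Proof. by split=> *; apply: pf_const. Qed.

Lemma actE (a : A) x i : act a x i 0 = \sum_j a.1 i j * x j 0 + a.2 i 0.
Proof. by rewrite /act !mxE. Qed.

Lemma pvec_act (P : A -> A) y : pmap P -> pvec y -> pvec (fun g => act (P g) (y g)).
Proof.
move=> [h1 h2] hy i; apply: (pf_ext (pf_add (pf_sum (index_enum _)
   (fun j => pf_mul (h1 i j) (hy j))) (h2 i))) => g.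
by rewrite actE.
Qed.

Lemma pvec_const x : pvec (fun _ => x).
Proof. by move=> i; apply: pf_const. Qed.

Lemma pf_comp f P : polyfun f -> pmap P -> polyfun (fun g => f (P g)).
Proof.
move=> pf [h1 h2]; induction pf.
- exact: pf_const.
- exact: h1.
- exact: h2.
- exact: pf_add.
- exact: pf_mul.
Qed.

Definition Psi (v0 : A) (v : 'I_n -> A) (y : 'cV[R]_n) : A :=
  (\matrix_(i, j) (act (v j) y i 0 - act v0 y i 0), act v0 y).

Lemma pmap_Psi v0 v y : pvec y -> pmap (fun g => Psi v0 v (y g)).
Proof.
move=> hy; split=> [i j|i] /=.
  apply: (pf_ext (pf_sub (pvec_act (pmap_const (v j)) hy i)
                         (pvec_act (pmap_const v0) hy i))) => g.
  by rewrite mxE.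
exact: (pvec_act (pmap_const v0) hy i).
Qed.

Lemma act_amul (g h : A) x : act (amul g h) x = act g (act h x).
Proof. by rewrite /act /amul /= mulmxDr mulmxA addrA. Qed.

Lemma act_one x : act (aone R n) x = x.
Proof. by rewrite /act /aone /= mul1mx addr0. Qed.

Lemma act_invK (g : A) x : g.1 \in unitmx -> act (ainv g) (act g x) = x.
Proof.
move=> u; rewrite /act /ainv /= mulmxDr mulKmx //.
by rewrite addrK.
Qed.

Lemma act_Kinv (g : A) x : g.1 \in unitmx -> act g (act (ainv g) x) = x.
Proof.
move=> u; rewrite /act /ainv /= mulmxDr mulmxN !mulmxA mulmxV // !mul1mx.
by rewrite -addrA [- _ + _]addrC subrr addr0.
Qed.

Lemma Iso_unit s (g : A) : Iso s g -> g.1 \in unitmx.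
Proof.
rewrite /Iso => e.
have dJ : \det (gramJ R n s) != 0.
  rewrite /gramJ det_diag; apply/prodf_neq0 => i _; rewrite mxE.
  by case: ifP => _; rewrite ?oppr_eq0 oner_eq0.
have := congr1 determinant e; rewrite !det_mulmx det_tr => e2.
rewrite unitmxE unitfE; apply/eqP => d0; move: e2; rewrite d0 !mul0r.
by move/eqP; rewrite eq_sym (negbTE dJ).
Qed.

Lemma Psi_act v0 v (g : A) p :
  act v0 p = 0 -> (forall j, act (v j) p = delta_mx j 0) ->
  (forall h : A, h = v0 \/ (exists j, h = v j) -> amul h g = amul g h) ->
  Psi v0 v (act g p) = g.
Proof.
move=> h0 hv hc.
have c h x : (h = v0 \/ (exists j, h = v j)) -> act h (act g x) = act g (act h x).
  by move=> hh; rewrite -!act_amul hc.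
case: g hc c => g1 g2 hc c.
rewrite /Psi; congr pair.
  apply/matrixP => i j; rewrite mxE c; last by right; exists j.
  rewrite c; last by left.
  rewrite hv h0 /act /= mulmx0 add0r -colE !mxE.
  by rewrite addrK.
by rewrite c; [rewrite h0 /act /= mulmx0 add0r | left].
Qed.

End H.

Theorem proposition6p6 (R : realType) (n s : nat) (hs : (s <= n)%N)
  (G U : aff R n -> Prop) :
  subgroup_of (Iso s) G -> zariski_closed G ->
  transitive_on (centralizer s G) (fun _ => True) ->
  unipotent_radical (centralizer s G) U ->
  transitive_on U (fun _ => True) ->
  forall p : 'cV[R]_n,
    let F := aorbit G p in
    let Up := fun u => U u /\ act u p = p in
    let UF := fun u => U u /\ (forall x, F x -> F (act u x)) in
    [/\ algebraic_subgroup_of U UF,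
        transitive_on UF F &
        normal_subgroup_of UF Up].
Proof.
move=> [GI [G1 [GM GV]]] [PG [hPG eG]] _
  [[[UL [U1 [UM UV]]] _] [[PU [hPU eU]] _]] hUtr p F Up UF.
have Uunit u : U u -> u.1 \in unitmx by move=> hu; exact: Iso_unit (UL u hu).1.
have Gunit g : G g -> g.1 \in unitmx by move=> hg; exact: Iso_unit (GI g hg).
have comm u g x : U u -> G g -> act u (act g x) = act g (act u x).
  by move=> hu hg; rewrite -!act_amul (UL u hu).2.
have Fp : F p by exists (aone R n); split => //; rewrite act_one.
have K u : U u -> F (act u p) -> forall x, F x -> F (act u x).
  move=> hu [h [hh eh]] x [g [hg <-]].
  hnf; exists (amul g h); split; first exact: (GM).
  by rewrite act_amul eh (comm u g).
have UFinv u : UF u -> UF (ainv u).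
  move=> [hu hF]; have [h [hh eh]] := hF p Fp.
  split; first exact: (UV).
  apply: (K); first exact: (UV).
  hnf; exists (ainv h); split; first exact: (GV).
  rewrite -(act_invK (act (ainv h) p) (Uunit u hu)) (comm u (ainv h) _ hu (GV h hh)).
  by rewrite -eh act_invK ?Gunit.
have UFsub : subgroup_of U UF.
  split; first by move=> g [].
  split; first by split=> // x Fx; rewrite act_one.
  split; last exact: UFinv.
  move=> g h [hg Fg] [hh Fh]; split; first exact: (UM).
  by move=> x Fx; rewrite act_amul; apply: (Fg); apply: (Fh).
split.
- split => //.
  have [v0 [hv0U hv0]] := constructive_indefinite_description _ (hUtr p 0 I I).
  pose v j := proj1_sig (constructive_indefinite_description _ (hUtr p (delta_mx j 0) I I)).
  have hv j : U (v j) /\ act (v j) p = delta_mx j 0.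
    exact: (proj2_sig (constructive_indefinite_description _ (hUtr p (delta_mx j 0) I I))).
  pose Phi u := Psi v0 v (act u p).
  have py : pvec (fun u : aff R n => act u p).
    exact: (pvec_act (@pmap_id R n) (pvec_const p)).
  have pPhi : pmap Phi by exact: (pmap_Psi v0 v py).
  have PsiG g : G g -> Phi g = g.
    move=> hg; apply: Psi_act => // [j|h [->|[j ->]]]; first by case: (hv j).
      by rewrite (UL v0 hv0U).2.
    by rewrite (UL (v j) (hv j).1).2.
  exists (fun f => PU f \/ (exists f', PG f' /\ f = fun u => f' (Phi u)) \/
     (exists i, f = fun u => act (Phi u) p i 0 - act u p i 0)).
  split.
    move=> f [hf|[[f' [hf' ->]]|[i ->]]]; first exact: hPU.
      exact: pf_comp (hPG f' hf') pPhi.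
    apply: pf_sub.
      exact: (pvec_act pPhi (pvec_const p)).
    exact: py.
  move=> u; split.
    move=> [hu hF]; have [g [hg eg]] := hF p Fp.
    have ePhi : Phi u = g by rewrite /Phi -eg; exact: PsiG.
    move=> f [hf|[[f' [hf' ->]]|[i ->]]].
    + by move/eU: hu; apply.
    + by rewrite ePhi; move/eG: hg; apply.
    + by rewrite ePhi eg subrr.
  move=> hall.
  have hu : U u by apply/eU => f hf; apply: hall; left.
  have hg : G (Phi u) by apply/eG => f hf; apply: (hall (fun u => f (Phi u))); right; left; exists f.
  have ep : act (Phi u) p = act u p.
    apply/matrixP => i j; rewrite (ord1 j); apply/eqP; rewrite -subr_eq0; apply/eqP.
    by apply: (hall (fun u => act (Phi u) p i 0 - act u p i 0)); right; right; exists i.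
  split => //; apply: (K) => //; by hnf; exists (Phi u).
- move=> x y [g [hg <-]] [h [hh <-]].
  have [u [hu eu]] := hUtr (act g p) (act h p) I I.
  exists u; split => //; split => //; apply: (K) => //.
  hnf; exists (amul (ainv g) h); split; first by apply: (GM) => //; apply: (GV).
  by rewrite act_amul -eu (comm u g p hu hg) act_invK // Gunit.
- split.
    split; first by move=> u [hu eu]; split => //; apply: (K) => //; rewrite eu.
    split; first by split => //; rewrite act_one.
    split.
      by move=> g h [hg eg] [hh eh]; split; [apply: (UM) | rewrite act_amul eh eg].
    move=> g [hg eg]; split; first exact: (UV).
    by rewrite -{1}eg act_invK // Uunit.
  move=> k x hk [hx ex]; have [hk1 _] := hk.
  split; first by apply: (UM); [apply: (UM) | apply: (UV)].
  have [hki Fk] := UFinv k hk.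
  have [g [hg eg]] := Fk p Fp.
  by rewrite !act_amul -eg (comm x g p hx hg) ex eg act_Kinv // Uunit.
Qed.
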